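(* Let $c\geq 1$ be an integer. For all integers $n\geq 1$, $$\bar a_c(n)\equiv\begin{cases}2 \pmod 4 & \text{if } n=k^2 \text{ for some } k\in\mathbb{Z},\\ 2(c+1)\pmod 4 & \text{if } n=2k^2 \text{ for some } k\in\mathbb{Z},\\ 0\pmod 4 & \text{otherwise.}\end{cases}$$
   Context: For an integer $k\geq 1$ let $f_k:=\prod_{n\geq 1}(1-q^{kn})$. For an integer $c\geq1$, the generalized overcubic partition function $\bar a_c(n)$ is defined by the generating function $\sum_{n\geq 0}\bar a_c(n)q^n=\dfrac{f_4^{c-1}}{f_1^2f_2^{2c-3}}$. *)

(* Defs.v *)
(* Formal power series over int, represented by coefficient
   functions nat -> int. *)
From mathcomp Require Import all_boot all_order all_algebra.
Set Implicit Arguments. Unset Strict Implicit. Unset Printing Implicit Defensive.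
Import Order.TTheory GRing.Theory Num.Theory.
Local Open Scope ring_scope.

Definition series := nat -> int.

Definition smul (a b : series) : series :=
  fun n => \sum_(i < n.+1) a i * b (n - i)%N.

Definition sone : series := fun n => (n == 0%N)%:R.
Definition smon (d : nat) : series := fun n => (n == d)%:R.
Definition ssub (a b : series) : series := fun n => a n - b n.

Definition spow (a : series) (k : nat) : series := iter k (smul a) sone.

(* Inverse of a series with constant term 1: 1/a = sum_j (1 - a)^j; since
   (1 - a) has zero constant term, the coefficient of q^n only involves j <= n. *)
Definition sinv (a : series) : series :=
  fun n => \sum_(j < n.+1) spow (ssub sone a) j n.

Definition szpow (a : series) (e : int) : series :=
  match e with
  | Posz k => spow a k
  | Negz k => spow (sinv a) k.+1
  end.

(* f_k = prod_{m >= 1} (1 - q^{k m}); for k >= 1 the coefficient of q^n only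
   depends on the factors with m <= n. *)
Definition f (k : nat) : series :=
  fun n => (\big[smul/sone]_(1 <= m < n.+1) ssub sone (smon (k * m))) n.

(* generalized overcubic partitions:
   sum abar_c(n) q^n = f_4^{c-1} / (f_1^2 f_2^{2c-3}) = f_4^{c-1} f_1^{-2} f_2^{3-2c} *)
Definition abar (c : nat) : series :=
  smul (spow (f 4) (c - 1)) (smul (szpow (f 1) (-2)) (szpow (f 2) (3 - 2 * (c : int)))).

(* Main.v *)
Require Import Defs.
From mathcomp Require Import all_boot all_order all_algebra.
From mathcomp Require Import zify ring lra.
Import Order.TTheory GRing.Theory Num.Theory.
Local Open Scope ring_scope.

Notation P4 := {poly 'Z_4}.

Definition eqt (M : nat) (p q : P4) := forall i, (i <= M)%N -> p`_i = q`_i.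

Lemma eqt_refl M p : eqt M p p. Proof. by []. Qed.
Lemma eqt_sym M p q : eqt M p q -> eqt M q p. Proof. by move=> h i hi; rewrite h. Qed.
Lemma eqt_trans M p q r : eqt M p q -> eqt M q r -> eqt M p r.
Proof. by move=> h1 h2 i hi; rewrite h1 // h2. Qed.
Lemma eqt_eq M p q : p = q -> eqt M p q. Proof. by move=> ->. Qed.
Lemma eqtD M p q p' q' : eqt M p p' -> eqt M q q' -> eqt M (p + q) (p' + q').
Proof. by move=> h1 h2 i hi; rewrite !coefD h1 // h2. Qed.
Lemma eqtN M p p' : eqt M p p' -> eqt M (- p) (- p').
Proof. by move=> h1 i hi; rewrite !coefN h1. Qed.
Lemma eqtM M p q p' q' : eqt M p p' -> eqt M q q' -> eqt M (p * q) (p' * q').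
Proof.
move=> h1 h2 i hi; rewrite !coefM; apply: eq_bigr => j _.
have hj := ltn_ord j.
by rewrite h1 ?h2 //; lia.
Qed.
Lemma eqtX M p p' k : eqt M p p' -> eqt M (p ^+ k) (p' ^+ k).
Proof. move=> h; elim: k => [|k ih]; first exact: eqt_refl.
by rewrite !exprS; apply: eqtM. Qed.
Lemma eqt_le M M' p q : (M' <= M)%N -> eqt M p q -> eqt M' p q.
Proof. by move=> hM h i hi; apply: h; apply: leq_trans hM. Qed.
Lemma eqt_prod M (I : Type) (r : seq I) (F G : I -> P4) :
  (forall i, eqt M (F i) (G i)) -> eqt M (\prod_(i <- r) F i) (\prod_(i <- r) G i).
Proof.
move=> h; elim: r => [|x r ih]; first by rewrite !big_nil; apply: eqt_refl.
by rewrite !big_cons; apply: eqtM.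
Qed.

Arguments eqt_sym {M p q}.
Arguments eqt_trans {M p q r}.
Arguments eqtD {M p q p' q'}.
Arguments eqtN {M p p'}.
Arguments eqtM {M p q p' q'}.
Arguments eqtX {M p p'} k.
Arguments eqt_le {M M' p q}.

Definition phi (M : nat) (a : series) : P4 := \poly_(i < M.+1) ((a i)%:~R : 'Z_4).

Lemma phi_coef M a i : (i <= M)%N -> (phi M a)`_i = (a i)%:~R.
Proof. by move=> hi; rewrite coef_poly ltnS hi. Qed.

Lemma phi_mul M a b : eqt M (phi M (smul a b)) (phi M a * phi M b).
Proof.
move=> i hi; rewrite phi_coef // coefM /smul rmorph_sum /=; apply: eq_bigr => j _.
have hj := ltn_ord j.
by rewrite intrM phi_coef ?phi_coef //; lia.
Qed.

Lemma phi_one M : eqt M (phi M sone) 1.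
Proof. by move=> i hi; rewrite phi_coef // coefC /sone; case: (i == 0%N). Qed.

Lemma phi_mon M d : eqt M (phi M (smon d)) 'X^d.
Proof. by move=> i hi; rewrite phi_coef // coefXn /smon; case: (i == d). Qed.

Lemma phi_sub M a b : eqt M (phi M (ssub a b)) (phi M a - phi M b).
Proof. by move=> i hi; rewrite coefB !phi_coef // /ssub intrB. Qed.

Lemma phi_pow M a k : eqt M (phi M (spow a k)) (phi M a ^+ k).
Proof.
elim: k => [|k ih]; first exact: phi_one.
rewrite exprS /spow iterS -/(spow a k).
apply: eqt_trans (phi_mul _ _ _) _; apply: eqtM => //; exact: eqt_refl.
Qed.

Lemma phi_big M (r : seq nat) (F : nat -> series) :
  eqt M (phi M (\big[smul/sone]_(i <- r) F i)) (\prod_(i <- r) phi M (F i)).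
Proof.
elim: r => [|x r ih]; first by rewrite !big_nil; apply: phi_one.
rewrite !big_cons; apply: eqt_trans (phi_mul _ _ _) _; apply: eqtM => //; exact: eqt_refl.
Qed.

Lemma order_pow (p : P4) j i : p`_0 = 0 -> (i < j)%N -> (p ^+ j)`_i = 0.
Proof.
move=> p0; elim: j i => [|j ih] i //; rewrite exprS coefM => hi.
apply: big1 => -[l hl] _ /=; case: l hl => [|l] hl; first by rewrite p0 mul0r.
by rewrite ih ?mulr0 //; lia.
Qed.

Lemma phi_inv M a : a 0%N = 1 -> eqt M (phi M a * phi M (sinv a)) 1.
Proof.
move=> a0.
set u := 1 - phi M a.
have u0 : u`_0 = 0.
  by rewrite coefB coefC /= phi_coef // a0 rmorph1 subrr.
have -> : phi M a = 1 - u by rewrite /u opprB addrC subrK.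
have h : eqt M (phi M (sinv a)) (\sum_(j < M.+1) u ^+ j).
  move=> i hi; rewrite phi_coef // /sinv rmorph_sum coef_sum /=.
  rewrite (big_ord_widen M.+1 (fun j => (spow (ssub sone a) j i)%:~R)) ?ltnS //.
  rewrite [RHS](bigID (fun j : 'I_M.+1 => (j < i.+1)%N)) /=.
  rewrite [X in _ = _ + X]big1 ?addr0; last first.
    by move=> j hj; rewrite order_pow //; lia.
  apply: eq_bigr => j _.
  have := phi_pow M (ssub sone a) j i hi; rewrite phi_coef // => ->.
  suff hh : eqt M (phi M (ssub sone a)) u by rewrite (eqtX j hh i hi).
  apply: eqt_trans (phi_sub _ _ _) _; apply: eqtD; first exact: phi_one.
  exact: eqt_refl.
apply: eqt_trans (eqtM (eqt_refl _ _) h) _.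
have -> : (1 - u) * \sum_(j < M.+1) u ^+ j = 1 - u ^+ M.+1.
  by rewrite -opprB mulNr -subrX1 opprB.
move=> i hi; rewrite coefB order_pow ?subr0 //.
Qed.
Lemma eqt_prod_seq M (r : seq nat) (F G : nat -> P4) :
  (forall i, i \in r -> eqt M (F i) (G i)) -> eqt M (\prod_(i <- r) F i) (\prod_(i <- r) G i).
Proof.
elim: r => [|x r ih] h; first by rewrite !big_nil; apply: eqt_refl.
rewrite !big_cons; apply: eqtM; first by apply: h; rewrite mem_head.
by apply: ih => i hi; apply: h; rewrite in_cons hi orbT.
Qed.

Lemma eqt_prod1 M (r : seq nat) (F : nat -> P4) :
  (forall i, i \in r -> eqt M (F i) 1) -> eqt M (\prod_(i <- r) F i) 1.
Proof.
elim: r => [|x r ih] h; first by rewrite !big_nil; apply: eqt_refl.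
rewrite !big_cons -[X in eqt _ _ X]mulr1; apply: eqtM; first by apply: h; rewrite mem_head.
by apply: ih => i hi; apply: h; rewrite in_cons hi orbT.
Qed.

Definition Fk (k M : nat) : P4 := \prod_(0 <= j < M) (1 - 'X^(k * j.+1)).

Lemma f_coef k M i : (0 < k)%N -> (i <= M)%N -> ((f k i)%:~R : 'Z_4) = (Fk k M)`_i.
Proof.
move=> k0 hi.
rewrite /f -(@phi_coef i _ i) //.
have h1 : eqt i (phi i (\big[smul/sone]_(1 <= m < i.+1) ssub sone (smon (k * m))))
    (\prod_(1 <= m < i.+1) (1 - 'X^(k * m))).
  apply: eqt_trans (phi_big _ _ _) _; apply: eqt_prod => m.
  apply: eqt_trans (phi_sub _ _ _) _; apply: eqtD; first exact: phi_one.
  apply: eqtN; exact: phi_mon.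
rewrite (h1 i (leqnn i)) big_add1 /= /Fk (@big_cat_nat _ _ _ i 0 M _ _ (leq0n i) hi) /=.
have h2 : eqt i (\prod_(i <= j < M) (1 - 'X^(k * j.+1))) 1.
  apply: eqt_prod1 => j; rewrite mem_index_iota => /andP [hj _] l hl.
  rewrite coefB coefXn coefC.
  have -> : (l == k * j.+1)%N = false by apply/negbTE; rewrite neq_ltn; apply/orP; left; nia.
  by rewrite subr0.
by rewrite (eqtM (eqt_refl _ _) h2 i (leqnn i)) mulr1.
Qed.

Lemma z4 : (4%:R : 'Z_4) = 0. Proof. by apply: val_inj. Qed.
Lemma four0 : (4%:R : P4) = 0.
Proof. by rewrite -polyC_natr z4 polyC0. Qed.

Lemma sq12 (t : P4) : (1 + 2 * t) ^+ 2 = 1.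
Proof.
have -> : (1 + 2 * t) ^+ 2 = 1 + 4%:R * (t + t ^+ 2) by ring.
by rewrite four0 mul0r addr0.
Qed.

Lemma pow12 (t : P4) m : (1 + 2 * t) ^+ m = 1 + 2 * (m%:R * t).
Proof.
elim: m => [|m ih]; first by rewrite expr0 mul0r mulr0 addr0.
rewrite exprS ih.
have -> : (1 + 2 * t) * (1 + 2 * (m%:R * t)) = 1 + 2 * (m.+1%:R * t) + 4%:R * (m%:R * t ^+ 2) by ring.
by rewrite four0 mul0r addr0.
Qed.

Lemma prod12 (r : seq nat) (w : nat -> P4) :
  \prod_(j <- r) (1 + 2 * w j) = 1 + 2 * \sum_(j <- r) w j.
Proof.
elim: r => [|x r ih]; first by rewrite !big_nil mulr0 addr0.
rewrite !big_cons ih.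
have -> : (1 + 2 * w x) * (1 + 2 * \sum_(j <- r) w j) =
   1 + 2 * (w x + \sum_(j <- r) w j) + 4%:R * (w x * \sum_(j <- r) w j) by ring.
by rewrite four0 mul0r addr0.
Qed.

Lemma factor (y : P4) N :
  (1 + y) * (1 + 2 * \sum_(r < N) y ^+ r.+1) = 1 - y - 2 * y ^+ N.+1.
Proof.
have -> : \sum_(r < N) y ^+ r.+1 = y * \sum_(r < N) y ^+ r.
  by rewrite mulr_sumr; apply: eq_bigr => r _; rewrite exprS.
set s := \sum_(r < N) y ^+ r.
have e : y ^+ N = (y - 1) * s + 1 by rewrite -subrX1 subrK.
rewrite exprS e.
apply/eqP; rewrite -subr_eq0; apply/eqP.
have -> : (1 + y) * (1 + 2 * (y * s)) - (1 - y - 2 * (y * ((y - 1) * s + 1))) =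
  4%:R * (y + y * s * y) by ring.
by rewrite four0 mul0r.
Qed.

Lemma sym2 (G : nat -> nat -> P4) N : (forall a b, G a b = G b a) ->
  2 * \sum_(0 <= a < N) \sum_(0 <= b < N) G a b = 2 * \sum_(0 <= a < N) G a a.
Proof.
move=> hG; elim: N => [|N ih]; first by rewrite !big_geq.
rewrite !big_nat_recr //=.
rewrite (eq_bigr (fun a => \sum_(0 <= b < N) G a b + G a N)); last first.
  by move=> a _; rewrite (@big_nat_recr _ _ _ N 0).
rewrite big_split /=.
have -> : \sum_(0 <= b < N) G N b = \sum_(0 <= a < N) G a N.
  by apply: eq_bigr => a _; rewrite hG.
set T := \sum_(0 <= a < N) \sum_(0 <= b < N) G a b.
set X := \sum_(0 <= a < N) G a N.
set D := \sum_(0 <= a < N) G a a.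
have -> : 2 * (T + X + (X + G N N)) = 2 * T + 2 * G N N + 4%:R * X by ring.
by rewrite ih four0 mul0r addr0 mulrDr.
Qed.

Definition Tk (k N : nat) : P4 := \sum_(0 <= j < N) 'X^(k * j.+1 ^ 2).
Definition Ak (k N : nat) : P4 := \prod_(0 <= j < N) (1 + 'X^(k * j.+1)).

Lemma Fk2 k N : Fk (2 * k) N = Fk k N * Ak k N.
Proof.
rewrite /Fk /Ak -big_split; apply: eq_bigr => j _ /=.
have -> : (2 * k * j.+1)%N = (k * j.+1 * 2)%N by lia.
rewrite exprM; ring.
Qed.

Lemma Fk_split k N : (0 < k)%N -> eqt N (Fk k N) (Ak k N * (1 + 2 * Tk k N)).
Proof.
move=> k0.
apply: (@eqt_trans _ _ (\prod_(0 <= j < N)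
   ((1 + 'X^(k * j.+1)) * (1 + 2 * \sum_(r < N) 'X^(k * j.+1) ^+ r.+1)))).
  apply: eqt_prod => j; rewrite factor -exprM => i hi.
  rewrite [in RHS]coefB mulr_natl coefMn coefXn.
  have -> : (i == k * j.+1 * N.+1)%N = false.
    by apply/negbTE; rewrite neq_ltn; apply/orP; left; nia.
  by rewrite mul0rn subr0.
rewrite big_split /= prod12 -/(Ak k N).
apply: eqtM; first exact: eqt_refl.
apply: eqt_eq; congr (1 + _).
rewrite /Tk.
have -> : \sum_(0 <= j < N) \sum_(r < N) 'X^(k * j.+1) ^+ r.+1 =
   \sum_(0 <= a < N) \sum_(0 <= b < N) ('X^(k * a.+1 * b.+1) : P4).
  apply: eq_bigr => a _; rewrite big_mkord; apply: eq_bigr => b _; by rewrite -exprM.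
rewrite sym2; last by move=> a b; congr 'X^_; lia.
by congr (2 * _); apply: eq_bigr => a _; congr 'X^_; lia.
Qed.

Lemma keyK k N : (0 < k)%N -> eqt N (Fk k N ^+ 2) (Fk (2 * k) N * (1 + 2 * Tk k N)).
Proof.
move=> k0; rewrite expr2 Fk2 -mulrA; apply: eqtM; first exact: eqt_refl.
exact: Fk_split.
Qed.

Lemma z4eq (x y : int) : (x%:~R : 'Z_4) = y%:~R -> (x = y %[mod 4])%Z.
Proof.
move=> h; apply/eqP; rewrite eqz_mod_dvd; apply/dvdz_mod0P.
have hz : ((x - y)%:~R : 'Z_4) = 0 by rewrite intrB h subrr.
move: hz; rewrite {1}(divz_eq (x - y) 4) intrD intrM.
have -> : ((4 : int)%:~R : 'Z_4) = 0 by exact: z4.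
rewrite mulr0 add0r.
have h0 := @modz_ge0 (x - y) 4 isT.
have h4 := @ltz_pmod (x - y) 4 isT.
case: ((x - y) %% 4)%Z h0 h4 => // m _ hm.
move=> /(congr1 val) /=; rewrite (@val_Zp_nat 4) //= => e.
move: hm; rewrite ltz_nat => hm; move: e; rewrite modn_small // => -> //.
Qed.

Lemma no_sq2 k m : (0 < k)%N -> (k ^ 2)%N <> (2 * m ^ 2)%N.
Proof.
move=> k0 e.
have m0 : (0 < m)%N.
  case: m e => // e; move: e; rewrite muln0 => /eqP; rewrite expn_eq0 /=; lia.
have := congr1 (logn 2) e.
rewrite lognX lognM ?expn_gt0 ?m0 // lognX.
have -> : logn 2 2 = 1%N by [].
lia.
Qed.

Lemma sum_ind1 (N n j0 : nat) (g : nat -> nat) : (j0 < N)%N -> n = g j0 ->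
  (forall a b, g a = g b -> a = b) ->
  \sum_(0 <= j < N) ((n == g j)%:R : 'Z_4) = 1.
Proof.
move=> hj e ginj; rewrite big_mkord (bigD1 (Ordinal hj)) //= e eqxx big1 ?addr0 //.
move=> j hj'; case: eqP => // /ginj ej; move: hj'; rewrite -val_eqE /= ej eqxx //.
Qed.

Lemma sum_ind0 (N n : nat) (g : nat -> nat) : (forall j, (j < N)%N -> n <> g j) ->
  \sum_(0 <= j < N) ((n == g j)%:R : 'Z_4) = 0.
Proof.
move=> h; rewrite big_mkord big1 // => j _; case: eqP => // /h; rewrite ltn_ord => /(_ isT) [].
Qed.

Lemma f0 k : f k 0 = 1.
Proof. by rewrite /f big_geq. Qed.

Lemma phi_f k N : (0 < k)%N -> eqt N (phi N (f k)) (Fk k N).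
Proof. by move=> k0 i hi; rewrite phi_coef // (f_coef _ _ _ k0 hi). Qed.

Lemma inv_f k N : (0 < k)%N -> eqt N (Fk k N * phi N (sinv (f k))) 1.
Proof.
move=> k0; apply: eqt_trans (phi_inv N _ (f0 k)).
by apply: eqtM; [apply: eqt_sym; apply: phi_f | apply: eqt_refl].
Qed.

Lemma eqt_cancel N (U V X Y : P4) : eqt N (U * V) 1 -> eqt N (X * U) (Y * U) -> eqt N X Y.
Proof.
move=> hUV h.
have e1 : eqt N X (X * U * V).
  by rewrite -mulrA -[X in eqt _ X _]mulr1; apply: eqtM; [apply: eqt_refl | apply: eqt_sym].
have e2 : eqt N (Y * U * V) Y.
  by rewrite -mulrA -[X in eqt _ _ X]mulr1; apply: eqtM; [apply: eqt_refl | ].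
apply: eqt_trans e1 _; apply: eqt_trans _ e2; apply: eqtM => //; exact: eqt_refl.
Qed.

Lemma abar_phi c' N :
  eqt N (phi N (abar c'.+1) * (Fk 1 N ^+ 2 * Fk 2 N ^+ (2 * c')))
        (Fk 2 N * Fk 4 N ^+ c').
Proof.
set I1 := phi N (sinv (f 1)); set I2 := phi N (sinv (f 2)).
have h1 := inv_f 1 N isT; have h2 := inv_f 2 N isT.
have hA : eqt N (phi N (abar c'.+1))
   (Fk 4 N ^+ c' * (I1 ^+ 2 * phi N (szpow (f 2) (3 - 2 * (c'.+1 : int))))).
  rewrite /abar; apply: eqt_trans (phi_mul _ _ _) _.
  apply: eqtM.
    rewrite subSS subn0; apply: eqt_trans (phi_pow _ _ _) _; apply: eqtX; exact: phi_f.
  apply: eqt_trans (phi_mul _ _ _) _; apply: eqtM; last exact: eqt_refl.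
  have -> : szpow (f 1) (-2) = spow (sinv (f 1)) 2 by [].
  exact: phi_pow.
apply: eqt_trans (eqtM hA (eqt_refl _ _)) _.
case: c' hA => [|d] _.
  have -> : szpow (f 2) (3 - 2 * (1 : int)) = spow (f 2) 1 by [].
  apply: eqt_trans (eqtM (eqtM (eqt_refl _ _) (eqtM (eqt_refl _ _) (phi_pow _ _ _))) (eqt_refl _ _)) _.
  rewrite ?muln0 !expr0 !expr1.
  have -> : 1 * (I1 ^+ 2 * phi N (f 2)) * (Fk 1 N ^+ 2 * 1) = (Fk 1 N * I1) ^+ 2 * phi N (f 2) by ring.
  apply: eqt_trans (eqtM (eqtX 2 h1) (phi_f 2 N isT)) _.
  rewrite expr1n mul1r mulr1; exact: eqt_refl.
have -> : 3 - 2 * (d.+2 : int) = Negz (2 * d) by rewrite NegzE; lia.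
rewrite /szpow.
apply: eqt_trans (eqtM (eqtM (eqt_refl _ _) (eqtM (eqt_refl _ _) (phi_pow _ _ _))) (eqt_refl _ _)) _.
have -> : (2 * d.+1 = (2 * d).+1.+1)%N by lia.
rewrite [Fk 2 N ^+ _]exprS.
have -> : forall (p4 i1 i2 f1 f2 f2' : P4), p4 * (i1 * i2) * (f1 * (f2 * f2')) =
   (i1 * f1) * (i2 * f2') * (f2 * p4) by move=> *; ring.
rewrite -!exprMn.
apply: eqt_trans (eqtM (eqtM (eqtX 2 _) (eqtX _ _)) (eqt_refl _ _)) _.
- by rewrite mulrC; exact: h1.
- by rewrite mulrC; exact: h2.
by rewrite !expr1n !mul1r; exact: eqt_refl.
Qed.

Lemma G_eq c' N :
  eqt N ((1 + 2 * Tk 1 N) * (1 + 2 * Tk 2 N) ^+ c' * (Fk 1 N ^+ 2 * Fk 2 N ^+ (2 * c')))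
        (Fk 2 N * Fk 4 N ^+ c').
Proof.
have k1 : eqt N (Fk 1 N ^+ 2) (Fk 2 N * (1 + 2 * Tk 1 N)) := keyK 1 N isT.
have k2 : eqt N (Fk 2 N ^+ 2) (Fk 4 N * (1 + 2 * Tk 2 N)) := keyK 2 N isT.
rewrite exprM.
apply: eqt_trans (eqtM (eqt_refl _ _) (eqtM k1 (eqtX c' k2))) _.
apply: eqt_eq; rewrite exprMn.
have -> : forall p1 q f2 r : P4, p1 * q * ((f2 * p1) * (r * q)) = p1 ^+ 2 * q ^+ 2 * (f2 * r)
  by move=> *; ring.
by rewrite sq12 -exprM mulnC exprM sq12 expr1n !mul1r.
Qed.

Theorem theorem1p3 (c n : nat) : (1 <= c)%N -> (1 <= n)%N ->
  [/\ (exists k : nat, n = (k ^ 2)%N) -> (abar c n = 2 %[mod 4])%Z,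
      (exists k : nat, n = (2 * k ^ 2)%N) -> (abar c n = 2 * (c%:Z + 1) %[mod 4])%Z
    & (~ (exists k : nat, n = (k ^ 2)%N)) -> (~ (exists k : nat, n = (2 * k ^ 2)%N)) ->
        (abar c n = 0 %[mod 4])%Z].
Proof.
case: c => // c' _ hn.
have hA : eqt n (phi n (abar c'.+1)) ((1 + 2 * Tk 1 n) * (1 + 2 * Tk 2 n) ^+ c').
  apply: (@eqt_cancel n (Fk 1 n ^+ 2 * Fk 2 n ^+ (2 * c'))
     (phi n (sinv (f 1)) ^+ 2 * phi n (sinv (f 2)) ^+ (2 * c'))).
    have -> : forall a b x y : P4, a ^+ 2 * b ^+ (2 * c') * (x ^+ 2 * y ^+ (2 * c'))
       = (a * x) ^+ 2 * (b * y) ^+ (2 * c') by move=> a b x y; rewrite !exprMn; ring.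
    have -> : (1 : P4) = 1 ^+ 2 * 1 ^+ (2 * c') by rewrite !expr1n mulr1.
    by apply: eqtM; apply: eqtX; apply: inv_f.
  apply: eqt_trans (abar_phi c' n) _; apply: eqt_sym; exact: (G_eq c' n).
have hc : ((abar c'.+1 n)%:~R : 'Z_4) =
    ((1 + 2 * Tk 1 n) * (1 + 2 * Tk 2 n) ^+ c')`_n by rewrite -(@phi_coef n (abar c'.+1) n) // (hA n (leqnn n)).
rewrite pow12 in hc.

have e4 : forall t1 t2 : P4, (1 + 2 * t1) * (1 + 2 * (c'%:R * t2)) =
   1 + (2 * t1 + 2 * (c'%:R * t2)).
  move=> t1 t2.
  have -> : (1 + 2 * t1) * (1 + 2 * (c'%:R * t2)) =
     1 + (2 * t1 + 2 * (c'%:R * t2)) + 4%:R * (t1 * c'%:R * t2) by ring.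
  by rewrite four0 mul0r addr0.
have hTk : forall k, (Tk k n)`_n = \sum_(0 <= j < n) ((n == k * j.+1 ^ 2)%N%:R : 'Z_4).
  by move=> k; rewrite /Tk coef_sum; apply: eq_bigr => j _; rewrite coefXn.
clear hA; rewrite e4 coefD coefC (_ : (n == 0%N) = false) ?add0r in hc; last by rewrite eqn0Ngt hn.
rewrite !mulr_natl coefD !coefMn !hTk in hc.
have inj1 : forall k a b, (0 < k)%N -> (k * a.+1 ^ 2)%N = (k * b.+1 ^ 2)%N -> a = b.
  move=> k a b k0 /eqP; rewrite eqn_mul2l eqn_exp2r // => /orP [|/eqP []//].
  by rewrite eqn0Ngt k0.
move: hc; generalize (abar c'.+1 n) => z hc.
split.
- move=> [k hk].
  have k0 : (0 < k)%N by case: k hk => // h; move: hn; rewrite h.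
  rewrite (@sum_ind1 n n k.-1 (fun j => 1 * j.+1 ^ 2)%N) in hc; first last.
  + by move=> a b; apply: inj1.
  + by rewrite mul1n prednK.
  + rewrite hk; clear hk; case: k k0 => // k _ /=; nia.
  rewrite sum_ind0 in hc; last first.
    move=> j _ e; apply: (@no_sq2 k j.+1) => //; by rewrite -hk.
  apply: z4eq; rewrite hc mul0rn mul0rn addr0. by [].
- move=> [k hk].
  have k0 : (0 < k)%N by case: k hk => // h; move: hn; rewrite h.
  rewrite (@sum_ind1 n n k.-1 (fun j => 2 * j.+1 ^ 2)%N) in hc; first last.
  + by move=> a b; apply: inj1.
  + by rewrite prednK.
  + rewrite hk; clear hk; case: k k0 => // k _ /=; nia.
  rewrite sum_ind0 in hc; last first.
    move=> j _ e; apply: (@no_sq2 j.+1 k) => //; by rewrite -hk e mul1n.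
  apply: z4eq; rewrite hc.
  have -> : ((2 * (c'.+1%:Z + 1))%:~R : 'Z_4) = 1 *+ c' *+ 2 + 4%:R.
    by rewrite intrM intrD !pmulrn; ring.
  by rewrite mul0rn add0r z4 addr0.
- move=> h1 h2.
  rewrite !sum_ind0 in hc.
  + by apply: z4eq; rewrite hc !mul0rn addr0.
  + by move=> j _ e; apply: h2; exists j.+1.
  + by move=> j _ e; apply: h1; exists j.+1; rewrite e mul1n.
Qed.
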